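(* Let $(T,X)$ be a flow, where $T$ is a Hausdorff topological group and $X$ is a Hausdorff uniform space which is a Baire space. If $(T,X)$ is thickly stable and $x\in X$ is a regularly a.p. point, then $(T,\overline{Tx})$ is a pointwise regularly a.p. and equicontinuous subflow of $(T,X)$ (i.e. every point of $\overline{Tx}$ is a regularly a.p. point, and $(T,\overline{Tx})$ is equicontinuous).
   Context: $\mathscr U_X$ is a compatible symmetric uniformity of $X$; $\varepsilon[A]=\{y:\exists a\in A,(a,y)\in\varepsilon\}$. $S\subseteq T$ is (right) thick if for every compact $K\subseteq T$ there is $t$ with $Kt\subseteq S$; $A\subseteq T$ is (right) syndetic if there is compact $K$ with $Kt\cap A\neq\emptyset$ for all $t\in T$. A flow is thickly stable if for every $\varepsilon\in\mathscr U_X$ and $x\in X$ there exist $\delta\in\mathscr U_X$ and a thick $S\subseteq T$ with $s(\delta[x])\subseteq\varepsilon[sx]$ for all $s\in S$. A point $x$ is regularly a.p. if for every neighborhood $U$ of $x$ the set $\{t\in T: tx\in U\}$ contains a syndetic normal closed subgroup of $T$. A flow $(T,Z)$ is equicontinuous if for every $\varepsilon$ and $z\in Z$ there is $\delta$ with $t(\delta[z])\subseteq\varepsilon[tz]$ for all $t\in T$. *)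

(* Defs.v *)
From HB Require Import structures.
From mathcomp Require Import all_boot all_order.
From mathcomp Require Import all_classical all_reals all_analysis.
Set Implicit Arguments. Unset Strict Implicit. Unset Printing Implicit Defensive.
Local Open Scope classical_set_scope.

Record topGroup (T : topologicalType) := TopGroup {
  tg_mul : T -> T -> T;
  tg_inv : T -> T;
  tg_one : T;
  tg_mulA : forall a b c, tg_mul a (tg_mul b c) = tg_mul (tg_mul a b) c;
  tg_mul1g : forall a, tg_mul tg_one a = a;
  tg_mulVg : forall a, tg_mul (tg_inv a) a = tg_one;
  tg_mul_cont : continuous (fun p : T * T => tg_mul p.1 p.2);
  tg_inv_cont : continuous tg_inv }.

Definition is_flow (T : topologicalType) (G : topGroup T) (X : topologicalType)
  (act : T -> X -> X) : Prop :=
  [/\ forall x, act (tg_one G) x = x,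
      forall s t x, act (tg_mul G s t) x = act s (act t x)
    & continuous (fun p : T * X => act p.1 p.2)].

Definition baire_space (X : topologicalType) : Prop :=
  forall F : nat -> set X, (forall n, open (F n) /\ dense (F n)) ->
    dense (\bigcap_n F n).

Definition symm_entourage (X : uniformType) (E : set (X * X)) : Prop :=
  entourage E /\ (forall a b, E (a, b) -> E (b, a)).

Definition ent_img (X : Type) (E : set (X * X)) (A : set X) : set X :=
  [set y | exists2 a, A a & E (a, y)].

Definition rtrans (T : topologicalType) (G : topGroup T) (K : set T) (t : T) : set T :=
  [set tg_mul G k t | k in K].

Definition thick (T : topologicalType) (G : topGroup T) (S : set T) : Prop :=
  forall K : set T, compact K -> exists t, rtrans G K t `<=` S.

Definition syndetic (T : topologicalType) (G : topGroup T) (A : set T) : Prop :=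
  exists2 K : set T, compact K & forall t, rtrans G K t `&` A !=set0.

Definition thickly_stable (T : topologicalType) (G : topGroup T) (X : uniformType)
  (act : T -> X -> X) : Prop :=
  forall eps, symm_entourage eps -> forall x : X,
    exists2 delta, symm_entourage delta &
      exists2 S : set T, thick G S &
        forall s, S s -> act s @` ent_img delta [set x] `<=` ent_img eps [set act s x].

Definition normal_closed_subgroup (T : topologicalType) (G : topGroup T) (H : set T) : Prop :=
  [/\ H (tg_one G),
      forall a b, H a -> H b -> H (tg_mul G a b),
      forall a, H a -> H (tg_inv G a),
      forall g h, H h -> H (tg_mul G (tg_mul G g h) (tg_inv G g))
    & closed H].

Definition regularly_ap (T : topologicalType) (G : topGroup T) (X : topologicalType)
  (act : T -> X -> X) (x : X) : Prop :=
  forall U : set X, nbhs x U ->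
    exists H : set T, [/\ normal_closed_subgroup G H, syndetic G H &
                          H `<=` [set t | U (act t x)]].

Definition orbit_closure (T : topologicalType) (X : topologicalType)
  (act : T -> X -> X) (x : X) : set X :=
  closure (range (fun t => act t x)).

(* Equicontinuity of the subflow (T, Y), Y with the subspace uniformity
   (entourages of Y = traces on Y x Y of entourages of X). *)
Definition equicontinuous_on (T : topologicalType) (X : uniformType)
  (act : T -> X -> X) (Y : set X) : Prop :=
  forall eps, symm_entourage eps -> forall z, Y z ->
    exists2 delta, symm_entourage delta &
      forall t, act t @` (ent_img delta [set z] `&` Y) `<=` ent_img eps [set act t z].

(* Main.v *)
Require Import Defs.
From mathcomp Require Import all_boot all_order.
From mathcomp Require Import all_classical all_reals all_analysis.
Local Open Scope classical_set_scope.

Lemma act_cont (T : topologicalType) (X : topologicalType) (act : T -> X -> X) t :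
  continuous (fun p : T * X => act p.1 p.2) -> continuous (act t).
Proof.
move=> Hc y.
have -> : act t = (fun p : T * X => act p.1 p.2) \o (fun z => (t, z)) by [].
apply: continuous_comp; last exact: Hc.
by apply: cvg_pair; [exact: cvg_cst | exact: cvg_id].
Qed.

Section Grp.
Variables (T : topologicalType) (G : topGroup T).
Local Notation mul := (tg_mul G).
Local Notation inv := (tg_inv G).
Local Notation one := (tg_one G).
Let mulA := tg_mulA G.
Let mul1g := tg_mul1g G.
Let mulVg := tg_mulVg G.

Lemma mulgV a : mul a (inv a) = one.
Proof.
rewrite -[mul a (inv a)]mul1g -(mulVg (inv a)).
rewrite -mulA [mul (inv a) _]mulA mulVg mul1g.
by rewrite mulVg.
Qed.

Lemma mulg1 a : mul a one = a.
Proof. by rewrite -(mulVg a) mulA mulgV mul1g. Qed.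

Lemma invgK a : inv (inv a) = a.
Proof.
by rewrite -[inv (inv a)]mulg1 -(mulVg a) mulA mulVg mul1g.
Qed.

Lemma decomp (H S : set T) : syndetic G H -> thick G S ->
  (forall a, H a -> H (inv a)) ->
  forall t, exists g s, [/\ H g, S s & t = mul g s].
Proof.
move=> [K cK HK] thS HI t.
have [u Ku] := thS K cK.
have [_ [[k Kk <-] Hh]] := HK (mul u (inv t)).
exists (inv (mul k (mul u (inv t)))), (mul k u); split.
- exact: HI.
- by apply: Ku; exists k.
have -> : mul k u = mul (mul k (mul u (inv t))) t.
  by rewrite -!mulA mulVg mulg1.
by rewrite mulA mulVg mul1g.
Qed.

End Grp.

Lemma split4 (X : uniformType) (E : set (X * X)) : entourage E ->
  exists2 D, symm_entourage D &
    forall a b c d e, D (a, b) -> D (b, c) -> D (c, d) -> D (d, e) -> E (a, e).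
Proof.
move=> eE.
have eE2 := entourage_split_ent eE.
have eE4 := entourage_split_ent eE2.
exists (split_ent (split_ent E) `&` (split_ent (split_ent E))^-1)%relation.
  split; first exact: entourage_invI.
  by move=> a b [h1 h2]; split.
move=> a b c d e [Dab _] [Dbc _] [Dcd _] [Dde _].
apply: (entourage_split c) => //.
  by apply: (entourage_split b).
by apply: (entourage_split d).
Qed.

Theorem theorem2p6 (T : topologicalType) (G : topGroup T) (X : uniformType)
  (act : T -> X -> X) (x : X) :
  hausdorff_space T -> hausdorff_space X -> baire_space X ->
  is_flow G act -> thickly_stable G act -> regularly_ap G act x ->
  [/\ forall t y, orbit_closure act x y -> orbit_closure act x (act t y),
      forall y, orbit_closure act x y -> regularly_ap G act y
    & equicontinuous_on act (orbit_closure act x)].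
Proof.
move=> _ _ _ [Hone Hmul Hc] Hts Hreg.
set Y := orbit_closure act x.
have actc := fun t => @act_cont T X act t Hc.
have invY : forall t y, Y y -> Y (act t y).
  move=> t y Yy B nB.
  have [z [[s _ <-] Bz]] := Yy _ (actc t y _ nB).
  exists (act t (act s x)); split => //.
  by exists (tg_mul G t s) => //; rewrite Hmul.
have hclose : forall E, entourage E -> exists H, [/\ normal_closed_subgroup G H,
    syndetic G H & forall w b, Y w -> H b -> E (w, act b w)].
  move=> E eE.
  have [D [eD sD] chain] := @split4 X E eE.
  have [dl [edl sdl] [S thS HS]] := Hts D (conj eD sD) x.
  have nU : nbhs x (ent_img dl [set x]).
    apply: filterS (nbhs_entourage x edl) => z /xsectionP dz.
    by exists x.
  have [H [[H1 HM HI HN Hcl] Hsyn HU]] := Hreg _ nU.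
  exists H; split => //.
  have claimA : forall t b, H b -> exists m,
      D (act t x, m) /\ D (m, act b (act t x)).
    move=> t b Hb.
    have [g [s [Hg Ss ->]]] := @decomp T G H S Hsyn thS HI t.
    have key : forall c, H c -> D (act s x, act c (act s x)).
      move=> c Hc'.
      have Hc2 := HN (tg_inv G s) c Hc'.
      set c2 := tg_mul G _ _ in Hc2.
      have U2 : ent_img dl [set x] (act c2 x) := HU _ Hc2.
      have [a /= -> Da] := HS s Ss (act s (act c2 x)) (ex_intro2 _ _ _ U2 erefl).
      suff <- : act s (act c2 x)
        = act c (act s x) by [].
      rewrite -!Hmul /c2; congr act.
      by rewrite invgK !tg_mulA mulgV tg_mul1g.
    exists (act s x); split.
      by rewrite Hmul; apply: sD; apply: key.
    by rewrite Hmul -Hmul; apply: key; apply: HM.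
  move=> w b Yw Hb.
  have nN : nbhs w (ent_img D [set w] `&`
                    act b @^-1` ent_img D [set act b w]).
    apply: filterI.
      apply: filterS (nbhs_entourage w eD) => z /xsectionP dz.
      by exists w.
    apply: (actc b w).
    apply: filterS (nbhs_entourage (act b w) eD) => z /xsectionP dz.
    by exists (act b w).
  have [z [[t _ <-] [[a /= -> Dwz] [a' /= -> Dbz]]]] := Yw _ nN.
  have [m [D1 D2]] := claimA t b Hb.
  exact: (chain _ _ _ _ _ Dwz D1 D2 (sD _ _ Dbz)).
split => //.
- move=> y Yy U /nbhsP [E eE EU].
  have [H [nH sH cl]] := hclose E eE.
  exists H; split => // t Ht.
  by apply: EU; apply/xsectionP; apply: cl.
- move=> eps [eeps seps] z Yz.
  have [D [eD sD] chain] := @split4 X eps eeps.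
  have [H [[_ _ HI _ _] Hsyn cl]] := hclose D eD.
  have [dl sdl [S thS HS]] := Hts D (conj eD sD) z.
  exists dl => //.
  move=> t _ [w [[a /= -> Da] Yw] <-].
  have [g [s [Hg Ss ->]]] := @decomp T G H S Hsyn thS HI t.
  exists (act (tg_mul G g s) z) => //.
  have [a' /= aE Dsw] := HS s Ss (act s w) (ex_intro2 _ _ w (ex_intro2 _ _ z erefl Da) erefl).
  rewrite aE in Dsw.
  rewrite !Hmul.
  apply: (chain _ (act s z) (act s w) (act g (act s w))).
  - by apply: sD; apply: cl => //; apply: invY.
  - exact: Dsw.
  - by apply: cl => //; apply: invY.
  - exact: entourage_refl.
Qed.
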